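(* Let $(X,\le)$ be a poset and $E$ an equivalence relation on $X$ with ${\le}\subseteq E$. If $\alpha:X\to X$ is an order automorphism of $(X,\le)$ with $\alpha\subseteq E$, then $\alpha\circ({\le}^c)^\smile=({\le}^c)^\smile\circ\alpha$, and this relation belongs to $\mathsf{Up}(\mathbf E)$.
   Context: For binary relations: converse $R^\smile=\{(x,y)\mid(y,x)\in R\}$; composition $R\circ S=\{(x,y)\mid\exists z\,((x,z)\in R,(z,y)\in S)\}$. A function $\alpha$ is identified with its graph $\{(x,\alpha(x))\}$. For a poset $(X,\le)$ and an equivalence relation $E\supseteq{\le}$ on $X$, $E$ is partially ordered by $(u,v)\preceq(x,y)$ iff $x\le u$ and $v\le y$; $\mathbf E=(E,\preceq)$ and $\mathsf{Up}(\mathbf E)$ is its set of up-sets. For $R\subseteq E$, $R^c=E\setminus R$. An order automorphism is a bijection $\alpha$ with $x\le y\iff\alpha(x)\le\alpha(y)$. *)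

(* Defs.v *)
Set Implicit Arguments.

Definition relation (X : Type) := X -> X -> Prop.

Definition conv {X : Type} (R : relation X) : relation X := fun x y => R y x.

Definition comp {X : Type} (R S : relation X) : relation X :=
  fun x y => exists z, R x z /\ S z y.

Definition graph {X : Type} (f : X -> X) : relation X := fun x y => y = f x.

Definition subrel {X : Type} (R S : relation X) : Prop := forall x y, R x y -> S x y.

Definition releq {X : Type} (R S : relation X) : Prop := forall x y, R x y <-> S x y.

Definition is_poset {X : Type} (le : relation X) : Prop :=
  (forall x, le x x) /\
  (forall x y, le x y -> le y x -> x = y) /\
  (forall x y z, le x y -> le y z -> le x z).

Definition is_equivalence {X : Type} (E : relation X) : Prop :=
  (forall x, E x x) /\
  (forall x y, E x y -> E y x) /\
  (forall x y z, E x y -> E y z -> E x z).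

(* R^c = E \ R *)
Definition relcompl {X : Type} (E R : relation X) : relation X :=
  fun x y => E x y /\ ~ R x y.

Definition Epreceq {X : Type} (le : relation X) (u v x y : X) : Prop :=
  le x u /\ le v y.

Definition in_Up {X : Type} (le E : relation X) (R : relation X) : Prop :=
  subrel R E /\
  (forall u v x y, R u v -> E x y -> Epreceq le u v x y -> R x y).

Definition bijective {X : Type} (f : X -> X) : Prop :=
  (forall x y, f x = f y -> x = y) /\ (forall y, exists x, f x = y).

Definition order_automorphism {X : Type} (le : relation X) (f : X -> X) : Prop :=
  bijective f /\ (forall x y, le x y <-> le (f x) (f y)).

(* Main.v *)
Require Import Defs.

Theorem lemma3p9 (X : Type) (le E : relation X) (alpha : X -> X) :
  is_poset le ->
  is_equivalence E ->
  subrel le E ->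
  order_automorphism le alpha ->
  subrel (graph alpha) E ->
  releq (comp (graph alpha) (conv (relcompl E le)))
        (comp (conv (relcompl E le)) (graph alpha)) /\
  in_Up le E (comp (graph alpha) (conv (relcompl E le))).
Proof.
  intros [Hr [Ha Ht]] [Er [Es Et]] HleE [[Hinj Hsur] Hmono] HaE.
  assert (Ex : forall x, E x (alpha x)) by (intro x; apply HaE; reflexivity).
  unfold releq, comp, graph, conv, relcompl, in_Up, subrel, Epreceq.
  split; [intros x y; split|split].
  - intros [z [-> [H1 H2]]].
    destruct (Hsur y) as [w <-].
    exists w. split; [split|reflexivity].
    + apply Et with (alpha w); [apply Ex|]. apply Et with (alpha x); [exact H1|apply Es, Ex].
    + intro H. apply H2, (proj1 (Hmono _ _)), H.
  - intros [z [[H1 H2] ->]].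
    exists (alpha x). split; [reflexivity|split].
    + apply Et with z; [apply Es, Ex|]. apply Et with x; [exact H1|apply Ex].
    + intro H. apply H2, (proj2 (Hmono _ _)), H.
  - intros u v [z [-> [H1 H2]]].
    apply Et with (alpha u); [apply Ex|apply Es, H1].
  - intros u v x y [z [-> [H1 H2]]] Hxy [Hxu Hvy].
    exists (alpha x). split; [reflexivity|split].
    + apply Et with x; [apply Es, Hxy|apply Ex].
    + intro H. apply H2. apply Ht with y; [exact Hvy|].
      apply Ht with (alpha x); [exact H|apply (proj1 (Hmono _ _)), Hxu].
Qed.
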